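(* Let $\mathbb{F}\in\{\mathbb{R},\mathbb{C}\}$, let $\Phi=\{\varphi_i\}_{i=1}^M$ be a Parseval frame for $\mathbb{F}^N$, and suppose there is $2\leq k\leq N$ such that $v_k(\Phi_K)$ is the same for all $K\subseteq[M]$ with $|K|=k$. Then $\Phi$ is equiangular.
   Context: A Parseval frame for $\mathbb{F}^N$ is a family $\{\varphi_i\}_{i=1}^M\subseteq\mathbb{F}^N$ whose $N\times M$ matrix $\Phi$ (columns $\varphi_i$) satisfies $\Phi\Phi^*=I$. It is equiangular if $\|\varphi_i\|=\|\varphi_j\|$ for all $i,j$ and $|\langle\varphi_i,\varphi_j\rangle|$ equals a common constant for all $i\ne j$. For $K\subseteq[M]$, $\Phi_K$ is the submatrix of columns indexed by $K$, and $v_k(F)=\sqrt{\det(F^*F)}$ for an $N\times k$ matrix $F$. *)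

(* Defs.v *)
From mathcomp Require Import all_boot all_order all_algebra.
From mathcomp Require Import reals.
From mathcomp.real_closed Require Import complex.
Set Implicit Arguments. Unset Strict Implicit. Unset Printing Implicit Defensive.
Import Order.TTheory GRing.Theory Num.Theory.
Local Open Scope ring_scope.

(* Frame notions over a scalar field F equipped with a conjugation [cj]
   (identity for F = R, complex conjugation for F = C) and a square root
   [sq] (Num.sqrt for R, sqrtC for C).  A family {phi_i}_{i<M} in F^N is
   stored as the N x M matrix Phi whose columns are the phi_i. *)
Section Frames.
Variables (F : numFieldType) (cj : F -> F) (sq : F -> F).

Definition adjmx (m n : nat) (A : 'M[F]_(m, n)) : 'M[F]_(n, m) := (map_mx cj A)^T.

Definition parseval (N M : nat) (Phi : 'M[F]_(N, M)) : Prop :=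
  Phi *m adjmx Phi = 1%:M.

Definition subcols (N M : nat) (Phi : 'M[F]_(N, M)) (K : {set 'I_M})
  : 'M[F]_(N, #|K|) := colsub (fun i : 'I_#|K| => enum_val i) Phi.

Definition vol (N k : nat) (G : 'M[F]_(N, k)) : F := sq (\det (adjmx G *m G)).

Definition frame_inner (N M : nat) (Phi : 'M[F]_(N, M)) (i j : 'I_M) : F :=
  \sum_(l < N) Phi l i * cj (Phi l j).

Definition frame_norm (N M : nat) (Phi : 'M[F]_(N, M)) (i : 'I_M) : F :=
  sq (frame_inner Phi i i).

Definition equiangular (N M : nat) (Phi : 'M[F]_(N, M)) : Prop :=
  (forall i j : 'I_M, frame_norm Phi i = frame_norm Phi j) /\
  exists c : F, forall i j : 'I_M, i != j -> `|frame_inner Phi i j| = c.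

End Frames.

(* Main.v *)
Require Import Defs.
From mathcomp Require Import all_boot all_order all_algebra.
From mathcomp Require Import reals.
From mathcomp.real_closed Require Import complex.
From mathcomp Require Import zify ring.
From mathcomp Require fingroup perm.
Import Order.TTheory GRing.Theory Num.Theory.
Local Open Scope ring_scope.

Module Helpers.
Import fingroup perm.
Set Implicit Arguments. Unset Strict Implicit. Unset Printing Implicit Defensive.
Lemma bordered_unit (R : idomainType) n (A : 'M[R]_n) (b : 'cV_n) (c : 'rV_n) (d : 'M_1) :
  \det A != 0 ->
  \det (block_mx A b c d) = d 0 0 * \det A - (c *m \adj A *m b) 0 0.
Proof.
move=> nzA.
pose X := block_mx 1%:M (- (\adj A *m b)) 0 (\det A)%:M : 'M[R]_(n + 1).
have dX : \det X = \det A by rewrite /X det_ublock det1 det_scalar1 mul1r.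
have : \det (block_mx A b c d *m X) = \det A * (d 0 0 * \det A - (c *m \adj A *m b) 0 0).
  rewrite /X mulmx_block !mulmx0 !mulmx1 addr0 !mulmxN mulmxA mul_mx_adj.
  rewrite mul_scalar_mx.
  have -> : - ((\det A) *: b) + b *m (\det A)%:M = 0.
    by rewrite mul_mx_scalar addNr.
  rewrite addr0 det_lblock det_mx11 -[in RHS]mulmxA [in LHS]mxE [in LHS]mxE.
  congr (_ * _); rewrite addrC; congr (_ + _).
  by rewrite !mxE big_ord1 !mxE eqxx mulr1n.
rewrite det_mulmx dX mulrC => /mulfI; apply; exact: nzA.
Qed.

Lemma bordered (F : fieldType) n (A : 'M[F]_n) (b : 'cV_n) (c : 'rV_n) (d : 'M_1) :
  \det (block_mx A b c d) = d 0 0 * \det A - (c *m \adj A *m b) 0 0.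
Proof.
pose Ap : 'M[{poly F}]_n := - char_poly_mx A.
have nz : \det Ap != 0.
  rewrite /Ap -scaleN1r detZ -/(char_poly A) mulf_neq0 //; first by rewrite expf_neq0 // oppr_eq0 oner_eq0.
  exact: monic_neq0 (char_poly_monic A).
have := bordered_unit (map_mx polyC b) (map_mx polyC c) (map_mx polyC d) nz.
move=> /(congr1 (horner_eval (0 : F))).
have hA : map_mx (horner_eval (0 : F)) Ap = A.
  apply/matrixP=> i j; rewrite !mxE horner_evalE.
  by rewrite hornerN hornerD hornerN hornerMn hornerX hornerC mul0rn sub0r opprK.
have hC : forall m k (B : 'M[F]_(m, k)), map_mx (horner_eval (0 : F)) (map_mx polyC B) = B.
  by move=> m k B; apply/matrixP=> i j; rewrite !mxE horner_evalE hornerC.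
rewrite -det_map_mx map_block_mx hA !hC => ->.
rewrite rmorphB rmorphM /= -det_map_mx hA.
have e1 : horner_eval 0 ((map_mx polyC d) 0 0) = d 0 0.
  by rewrite horner_evalE !mxE hornerC.
have e2 : horner_eval 0 ((map_mx polyC c *m \adj Ap *m map_mx polyC b) 0 0) = (c *m \adj A *m b) 0 0.
  by rewrite -[in RHS](hC _ _ c) -[in RHS](hC _ _ b) -hA -map_mx_adj -!map_mxM [RHS]mxE.
by rewrite e1 e2.
Qed.
Lemma lshiftK m n (a : 'I_m) : split (lshift n a) = inl a.
Proof. exact: (unsplitK (inl a)). Qed.
Lemma rshiftK m n (a : 'I_n) : split (rshift m a) = inr a.
Proof. exact: (unsplitK (inr a)). Qed.

Section Core.
Variables (F : numFieldType) (M : nat) (G : 'M[F]_M).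

Definition minor n (f : 'I_n -> 'I_M) := \det (\matrix_(a, b) G (f a) (f b)).

Definition ext n (f : 'I_n -> 'I_M) (i : 'I_M) : 'I_(n + 1) -> 'I_M :=
  fun a => match split a with inl a' => f a' | inr _ => i end.

Lemma minor_noninj n (g : 'I_n -> 'I_M) : ~~ injectiveb g -> minor g = 0.
Proof.
move=> /injectivePn [x [y nxy e]].
by apply: (determinant_alternate nxy) => j; rewrite !mxE e.
Qed.

Lemma ext_inj n (f : 'I_n -> 'I_M) i :
  injectiveb (ext f i) = injectiveb f && (i \notin codom f).
Proof.
apply/injectiveP/andP.
  move=> inj; split.
    apply/injectiveP=> a b e.
    have : ext f i (lshift 1 a) = ext f i (lshift 1 b) by rewrite /ext !lshiftK.
    by move/inj/lshift_inj.
  apply/negP=> /codomP [a e].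
  have : ext f i (lshift 1 a) = ext f i (rshift n ord0).
    by rewrite /ext lshiftK rshiftK.
  move/inj=> /eqP; by rewrite eq_lrshift.
move=> [/injectiveP inj nc] a b.
rewrite /ext -{2}[a]splitK -{2}[b]splitK.
case: (split a) => [a'|a']; case: (split b) => [b'|b'] //=.
- by move/inj->.
- by move=> e; case/negP: nc; rewrite -e codom_f.
- by move=> e; case/negP: nc; rewrite e codom_f.
- by rewrite (ord1 a') (ord1 b').
Qed.

Lemma minor_ext n (f : 'I_n -> 'I_M) i :
  minor (ext f i) = G i i * minor f -
   (\row_b G i (f b) *m \adj (\matrix_(a, b) G (f a) (f b)) *m \col_a G (f a) i) 0 0.
Proof.
rewrite /minor.
have -> : \matrix_(a, b) G (ext f i a) (ext f i b) =
   block_mx (\matrix_(a, b) G (f a) (f b)) (\col_a G (f a) i) (\row_b G i (f b)) (G i i)%:M.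
  apply/matrixP=> a b; rewrite /ext !mxE.
  case: (split a) => a'; rewrite !mxE; case: (split b) => b'; rewrite !mxE //.
  by rewrite (ord1 a') (ord1 b') eqxx mulr1n.
by rewrite bordered mxE eqxx mulr1n.
Qed.

Variable N : nat.
Hypotheses (hG2 : G *m G = G) (htr : \tr G = N%:R).

Lemma claimA n (f : 'I_n -> 'I_M) :
  \sum_i minor (ext f i) = (N%:R - n%:R) * minor f.
Proof.
under eq_bigr do rewrite minor_ext.
rewrite sumrB -mulr_suml -htr /mxtrace mulrBl; congr (_ - _).
set A := \matrix_(a, b) G (f a) (f b).
have -> : \sum_i (\row_b G i (f b) *m \adj A *m \col_a G (f a) i) 0 0
   = \tr (A *m \adj A).
  transitivity (\sum_i \sum_a \sum_b G i (f b) * \adj A b a * G (f a) i).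
    apply: eq_bigr => i _.
    rewrite mxE; apply: eq_bigr => a _.
    by rewrite !mxE mulr_suml; apply: eq_bigr => b _; rewrite !mxE.
  rewrite exchange_big /= /mxtrace; apply: eq_bigr => a _; rewrite exchange_big /=.
  rewrite mxE; apply: eq_bigr => b _.
  transitivity (\adj A b a * (G *m G) (f a) (f b)); last by rewrite hG2 !mxE mulrC.
  rewrite [X in _ = _ * X]mxE mulr_sumr; apply: eq_bigr => i _; ring.
by rewrite (mul_mx_adj A) mxtrace_scalar mulr_natl.
Qed.

Definition Pc n (c : F) := forall g : 'I_n -> 'I_M, injective g -> minor g = c.

Lemma descend n c : (n < N)%N -> Pc (n + 1) c ->
  Pc n (c * (M - n)%:R / (N - n)%:R).
Proof.
move=> ltnN P f injf.
have := claimA f.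
have -> : \sum_i minor (ext f i) = \sum_(i in [pred i | i \notin codom f]) c.
  rewrite [RHS]big_mkcond /=; apply: eq_bigr => i _.
  have := ext_inj f i; rewrite (introT (injectiveP f) injf) /= inE.
  case: (boolP (i \in codom f)) => /= hi h.
    by rewrite minor_noninj // h.
  by rewrite (P _ (elimT (injectiveP _) h)).
rewrite sumr_const.
have -> : #|[pred i | i \notin codom f]| = (M - n)%N.
  have h1 := cardC (mem (codom f)).
  rewrite (card_codom injf) (card_ord n) (card_ord M) in h1.
  have h2 : #|[pred i | i \notin codom f]| = #|[predC (mem (codom f))]|.
    by apply: eq_card => i; rewrite !inE.
  have nM : (n <= M)%N by have := leq_addr #|[predC (mem (codom f))]| n; rewrite h1.
  apply: (@addnI n); rewrite subnKC //; exact: etrans _ h1.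
rewrite -natrB ?(ltnW ltnN) // => e.
have nz : (N - n)%:R != 0 :> F by rewrite pnatr_eq0 subn_eq0 -ltnNge.
by rewrite mulr_natr e mulrC mulKf.
Qed.

Lemma levels k c : (k <= N)%N -> Pc k c -> forall n, (n <= k)%N -> exists c', Pc n c'.
Proof.
move=> kN Pk n nk.
have [d ->] : exists d, n = (k - d)%N by exists (k - n)%N; rewrite subKn.
elim: d {n nk} => [|d IH]; first by exists c; rewrite subn0.
case: (leqP k d) => kd.
  have -> : (k - d.+1 = k - d)%N by lia.
  exact: IH.
case: IH => c' P'.
exists (c' * (M - (k - d.+1))%:R / (N - (k - d.+1))%:R).
apply: descend; first by lia.
by have -> : (k - d.+1 + 1 = k - d)%N by lia.
Qed.

Lemma descend_le n : (n < N)%N ->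
  (forall g : 'I_(n + 1) -> 'I_M, injective g -> minor g <= 0) ->
  forall f : 'I_n -> 'I_M, injective f -> minor f <= 0.
Proof.
move=> ltnN P f injf.
have := claimA f; rewrite -natrB ?(ltnW ltnN) // => e.
have : \sum_i minor (ext f i) <= 0.
  rewrite -oppr_ge0 -sumrN; apply: sumr_ge0 => i _; rewrite oppr_ge0.
  case: (boolP (injectiveb (ext f i))) => h.
    exact: P (elimT (injectiveP _) h).
  by rewrite minor_noninj.
by rewrite e pmulr_rle0 // ltr0n subn_gt0.
Qed.

Lemma levels_le k : (k <= N)%N ->
  (forall g : 'I_k -> 'I_M, injective g -> minor g <= 0) -> False.
Proof.
move=> kN Pk.
suff : forall d, (d <= k)%N -> forall g : 'I_(k - d) -> 'I_M, injective g -> minor g <= 0.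
  move=> /(_ k (leqnn k)); rewrite subnn => /(_ (fun i => match i with Ordinal _ h => False_rect _ (notF h) end)).
  rewrite /minor det_mx00 ler10 => H; apply: notF; apply: H => a; by case: a.
elim=> [|d IH] dk; first by rewrite subn0.
apply: descend_le; first by lia.
have -> : (k - d.+1 + 1 = k - d)%N by lia.
apply: IH; lia.
Qed.

Lemma core k c : (2 <= k <= N)%N -> Pc k c ->
  (forall i j, G i i = G j j) /\ exists e, forall i j, i != j -> G i j * G j i = e.
Proof.
move=> /andP [k2 kN] Pk.
have [c1 P1] := levels kN Pk (n := 1) (ltnW k2).
have [c2 P2] := levels kN Pk (n := 1 + 1) k2.
have d1 : forall i, G i i = c1.
  move=> i; rewrite -(P1 (fun _ => i)); last by move=> a b _; rewrite (ord1 a) (ord1 b).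
  by rewrite /minor det_mx11 mxE.
split; first by move=> i j; rewrite !d1.
exists (c1 * c1 - c2) => i j nij.
have inj : injective (ext (fun _ : 'I_1 => i) j).
  apply/injectiveP; rewrite ext_inj; apply/andP; split.
    by apply/injectiveP => a b _; rewrite (ord1 a) (ord1 b).
  by apply/codomP => -[a /= e]; move: nij; rewrite e eqxx.
have := P2 _ inj; rewrite minor_ext.
have -> : minor (fun _ : 'I_1 => i) = c1 by rewrite /minor det_mx11 mxE d1.
rewrite d1 !mxE big_ord1 !mxE big_ord1 !mxE /cofactor det_mx00 => <-.
rewrite expr0 !mul1r mulr1; ring.
Qed.

End Core.

Lemma minor_perm (F : numFieldType) M (G : 'M[F]_M) n m (f : 'I_n -> 'I_M) (g : 'I_m -> 'I_M) :
  injective f -> injective g -> codom f =i codom g -> minor G f = minor G g.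
Proof.
move=> injf injg cfg.
have e : m = n.
  by rewrite -(card_ord m) -(card_ord n) -(card_codom injf) -(card_codom injg); apply: eq_card => x; rewrite cfg.
subst m.
have hg : forall a, g a \in codom f by move=> a; rewrite cfg codom_f.
pose sg := fun a => iinv (hg a).
have fsg : forall a, f (sg a) = g a by move=> a; rewrite /sg f_iinv.
have sinj : injective sg by move=> a b e; apply: injg; rewrite -!fsg e.
pose s := perm.perm sinj.
rewrite /minor.
have -> : \matrix_(a, b) G (g a) (g b) =
    perm_mx s *m (\matrix_(a, b) G (f a) (f b)) *m perm_mx (s^-1)%g.
  rewrite -row_permE -col_permE; apply/matrixP => a b.
  by rewrite !mxE !perm.permE -!fsg.
rewrite !det_mulmx !det_perm perm.odd_permV mulrC mulrA.
by case: (perm.odd_perm s); rewrite ?expr1 ?expr0 ?mulrNN !mul1r.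
Qed.

Lemma codom_enum_val (T : finType) (K : {set T}) :
  codom (fun a : 'I_#|K| => enum_val a) =i K.
Proof.
move=> x; apply/codomP/idP => [[a ->]|xK]; first exact: enum_valP.
by exists (enum_rank_in xK x); rewrite enum_rankK_in.
Qed.

Section FrameLink.
Variables (F : numFieldType) (cj sq : F -> F) (N M : nat) (Phi : 'M[F]_(N, M)).

Lemma vol_minor K : vol cj sq (subcols Phi K) =
  sq (minor (adjmx cj Phi *m Phi) (fun a : 'I_#|K| => enum_val a)).
Proof.
rewrite /vol /minor; congr (sq (\det _)); apply/matrixP => a b; rewrite !mxE.
by apply: eq_bigr => l _; rewrite !mxE.
Qed.

Lemma G2 : parseval cj Phi -> (adjmx cj Phi *m Phi) *m (adjmx cj Phi *m Phi) = adjmx cj Phi *m Phi.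
Proof. by move=> hP; rewrite mulmxA -[adjmx cj Phi *m Phi *m _]mulmxA hP mulmx1. Qed.

Lemma Gtr : parseval cj Phi -> \tr (adjmx cj Phi *m Phi) = N%:R.
Proof. by move=> hP; rewrite mxtrace_mulC hP mxtrace1. Qed.

Lemma inner_G i j : frame_inner cj Phi i j = (adjmx cj Phi *m Phi) j i.
Proof. rewrite /frame_inner !mxE; apply: eq_bigr => l _; by rewrite !mxE mulrC. Qed.

Lemma sq_minor_eq k :
  (forall K1 K2 : {set 'I_M}, #|K1| = k -> #|K2| = k ->
        vol cj sq (subcols Phi K1) = vol cj sq (subcols Phi K2)) ->
  forall g1 g2 : 'I_k -> 'I_M, injective g1 -> injective g2 ->
  sq (minor (adjmx cj Phi *m Phi) g1) = sq (minor (adjmx cj Phi *m Phi) g2).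
Proof.
move=> hK.
have key : forall g : 'I_k -> 'I_M, injective g ->
    sq (minor (adjmx cj Phi *m Phi) g) = vol cj sq (subcols Phi [set x in codom g]).
  move=> g ig; rewrite vol_minor; congr sq; apply: minor_perm => //.
    exact: enum_val_inj.
  by move=> x; rewrite codom_enum_val inE.
have card : forall g : 'I_k -> 'I_M, injective g -> #|[set x in codom g]| = k.
  by move=> g ig; rewrite cardsE card_codom // card_ord.
move=> g1 g2 i1 i2; rewrite (key _ i1) (key _ i2); apply: hK; exact: card.
Qed.
End FrameLink.

End Helpers.
Import Helpers.

Theorem corollary10 (R : realType) :
  (forall (N M k : nat) (Phi : 'M[R]_(N, M)),
     parseval id Phi ->
     (2 <= k <= N)%N ->
     (forall K1 K2 : {set 'I_M}, #|K1| = k -> #|K2| = k ->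
        vol id Num.sqrt (subcols Phi K1) = vol id Num.sqrt (subcols Phi K2)) ->
     equiangular id Num.sqrt Phi) /\
  (forall (N M k : nat) (Phi : 'M[R[i]]_(N, M)),
     parseval (fun z : R[i] => z^*) Phi ->
     (2 <= k <= N)%N ->
     (forall K1 K2 : {set 'I_M}, #|K1| = k -> #|K2| = k ->
        vol (fun z : R[i] => z^*) sqrtC (subcols Phi K1) = vol (fun z : R[i] => z^*) sqrtC (subcols Phi K2)) ->
     equiangular (fun z : R[i] => z^*) sqrtC Phi).
Proof.
split.
- move=> N M k Phi hP hk hK.
  have hG2 := G2 hP; have htr := Gtr hP.
  have hsq := sq_minor_eq hK.
  set G := adjmx id Phi *m Phi in hG2 htr hsq.
  have kN : (k <= N)%N by case/andP: hk.
  have [c Pk] : exists c, Pc G k c.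
    case: (boolP [exists g : {ffun 'I_k -> 'I_M}, injectiveb g && (0 < minor G g)]).
      move=> /existsP [g0 /andP [/injectiveP ig0 pos]].
      exists (minor G g0) => g ig.
      have e := hsq g g0 ig ig0.
      have pg : 0 < minor G g by rewrite -sqrtr_gt0 e sqrtr_gt0.
      by rewrite -(sqr_sqrtr (ltW pg)) e sqr_sqrtr // ltW.
    move=> /existsPn H; exfalso; apply: (levels_le hG2 htr kN) => g ig.
    have := H [ffun x => g x]; rewrite negb_and.
    have -> : injectiveb [ffun x => g x].
      by apply/injectiveP => a b; rewrite !ffunE => /ig.
    have -> : minor G [ffun x => g x] = minor G g.
      by rewrite /minor; congr (\det _); apply/matrixP => a b; rewrite !mxE !ffunE.
    by rewrite /= real_leNgt ?num_real.
  have [dG [e hE]] := core hG2 htr hk Pk.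
  split.
    by move=> i j; rewrite /frame_norm !inner_G -/G (dG i j).
  exists (Num.sqrt e) => i j nij; rewrite inner_G -/G.
  have sym : forall a b, G a b = G b a.
    by move=> a b; rewrite /G !mxE; apply: eq_bigr => l _; rewrite !mxE mulrC.
  by rewrite -sqrtr_sqr expr2 -{2}sym hE // eq_sym.
- move=> N M k Phi hP hk hK.
  have hG2 := G2 hP; have htr := Gtr hP.
  have hsq := sq_minor_eq hK.
  set G := adjmx _ Phi *m Phi in hG2 htr hsq.
  have kN : (k <= N)%N by case/andP: hk.
  have sinj : forall x y : R[i], sqrtC x = sqrtC y -> x = y.
    by move=> x y e; rewrite -[x]sqrtCK -[y]sqrtCK e.
  have [c Pk] : exists c, Pc G k c.
    case: (boolP [exists g : {ffun 'I_k -> 'I_M}, injectiveb g]).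
      move=> /existsP [g0 /injectiveP ig0].
      by exists (minor G g0) => g ig; apply: sinj; apply: hsq.
    move=> /existsPn H; exists 0 => g ig; exfalso.
    have := H [ffun x => g x].
    have -> // : injectiveb [ffun x => g x].
    by apply/injectiveP => a b; rewrite !ffunE => /ig.
  have [dG [e hE]] := core hG2 htr hk Pk.
  split.
    by move=> i j; rewrite /frame_norm !inner_G -/G (dG i j).
  exists (sqrtC e) => i j nij; rewrite inner_G -/G.
  have cj : forall a b, (G a b)^* = G b a.
    move=> a b; rewrite /G !mxE rmorph_sum; apply: eq_bigr => l _.
    by rewrite !mxE rmorphM /= conjCK mulrC.
  by rewrite -[LHS]sqrCK ?normr_ge0 // normCK cj hE // eq_sym.
Qed.
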